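(* For every integer $N\ge 2$, every $\delta<0$, every $\beta>0$ and every $\theta\ge 0$, and for $E\in\{E_r,E_p\}$, $$\frac{N^2\theta}{2}\Big(H_N+\frac{1}{N-1}\Big)\le E(\theta)\le N(N-1)\,\theta\,\big(H_N+1\big).$$
   Context: Fix an integer $N\ge 2$, a real number $\delta<0$, and $\beta>0$. For $\theta\in\mathbb{R}$ put $x=\beta(\theta+\delta)$. For $1\le i\le N-1$ define $u_{i,i+1}=\frac{i(N-i)}{N^2}(1+e^{-x})^{-1}$, $u_{i,i-1}=\frac{i(N-i)}{N^2}(1+e^{x})^{-1}$, $u_{i,i}=1-u_{i,i+1}-u_{i,i-1}$, and $u_{i,j}=0$ for $|i-j|\ge 2$. Let $U=(u_{ij})_{i,j=1}^{N-1}$ and $\mathcal{N}=(n_{ij})_{i,j=1}^{N-1}=(I-U)^{-1}$. Define $E_r(\theta)=\frac{\theta}{2}\sum_{i=1}^{N-1}(n_{1i}+n_{N-1,i})\,i$ and $E_p(\theta)=\frac{\theta}{2}\sum_{i=1}^{N-1}(n_{1i}+n_{N-1,i})\,(N-i)$. The harmonic number is defined here as $H_N=\sum_{j=1}^{N-1}\frac1j$ (note the sum stops at $N-1$). *)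

(* Defs.v *)
From HB Require Import structures.
From mathcomp Require Import all_boot all_order all_algebra.
From mathcomp Require Import all_classical all_reals all_analysis.
Unset Printing Implicit Defensive.
Import Order.TTheory GRing.Theory Num.Theory.
Local Open Scope ring_scope.

Section Defs.
Variable R : realType.

Definition xval (beta delta theta : R) : R := beta * (theta + delta).

(* paper indices a in {1,...,N-1} (nat) *)
Definition u_up (N : nat) (beta delta theta : R) (a : nat) : R :=
  (((a * (N - a))%N)%:R / ((N ^ 2)%N)%:R) / (1 + expR (- xval beta delta theta)).
Definition u_down (N : nat) (beta delta theta : R) (a : nat) : R :=
  (((a * (N - a))%N)%:R / ((N ^ 2)%N)%:R) / (1 + expR (xval beta delta theta)).

(* U = (u_{ab})_{a,b=1}^{N-1}; the ordinal i : 'I_(N.-1) stands for index i+1 *)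
Definition Umat (N : nat) (beta delta theta : R) : 'M[R]_(N.-1) :=
  \matrix_(i, j)
    let a := i.+1 in let b := j.+1 in
    if b == a.+1 then u_up N beta delta theta a
    else if b.+1 == a then u_down N beta delta theta a
    else if b == a then 1 - u_up N beta delta theta a - u_down N beta delta theta a
    else 0.

Definition Nmat (N : nat) (beta delta theta : R) : 'M[R]_(N.-1) :=
  invmx (1%:M - Umat N beta delta theta).

(* n_{1,i} + n_{N-1,i}  (ordinal 0 is index 1, ordinal N-2 is index N-1) *)
Definition nsum (N : nat) (beta delta theta : R) (i : 'I_(N.-1)) : R :=
  \sum_(k : 'I_(N.-1))
     (((k : nat) == 0%N)%:R + ((k : nat) == N.-2)%:R) * Nmat N beta delta theta k i.

Definition E_r (N : nat) (beta delta theta : R) : R :=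
  theta / 2 * \sum_(i : 'I_(N.-1)) nsum N beta delta theta i * (i.+1)%:R.

Definition E_p (N : nat) (beta delta theta : R) : R :=
  theta / 2 * \sum_(i : 'I_(N.-1)) nsum N beta delta theta i * ((N - i.+1)%N)%:R.

Definition H (N : nat) : R := \sum_(1 <= j < N) (j%:R)^-1.

End Defs.

(* Main.v *)
Require Import Defs.
From HB Require Import structures.
From mathcomp Require Import all_boot all_order all_algebra.
From mathcomp Require Import all_classical all_reals all_analysis.
From mathcomp Require Import ring lra zify.
Import Order.TTheory GRing.Theory Num.Theory.
Local Open Scope ring_scope.

Definition Hs (R : realType) (m : nat) : R := \sum_(i < m) (i.+1%:R)^-1.

Lemma Hs_S (R : realType) m : Hs R m.+1 = Hs R m + (m.+1%:R)^-1.
Proof. by rewrite /Hs big_ord_recr. Qed.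

Lemma Hs4 (R : realType) : Hs R 4 = 25/12.
Proof. rewrite !Hs_S /Hs big_ord0. by field. Qed.

Lemma Hs_bounds (R : realType) m : 4/3 <= Hs R (m+4) /\ 3 * Hs R (m+4) <= 2 * (m+4)%:R - 1.
Proof.
elim: m => [|m [IH1 IH2]].
  rewrite add0n Hs4; split; lra.
rewrite addSn Hs_S; split.
  by rewrite (le_trans IH1) // lerDl invr_ge0 ler0n.
have h : (m + 4).+1%:R^-1 <= 1/2 :> R.
  by rewrite div1r lef_pV2 ?posrE ?ltr0n // ler_nat; lia.
set t := ((m + 4).+1%:R^-1 : R) in h *.
have e : (m + 4).+1%:R = (m + 4)%:R + 1 :> R by rewrite -natr1.
rewrite e; lra.
Qed.

Lemma sum_ind (R : realType) (m k : nat) (F : nat -> R) : (k < m)%N ->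
  \sum_(i < m) ((i:nat) == k)%:R * F i = F k.
Proof.
move=> hk; rewrite (bigD1 (Ordinal hk)) //= eqxx mul1r big1 ?addr0 // => i hi.
have -> : ((i:nat) == k) = false.
  by apply/negbTE; apply: contra hi => /eqP h; apply/eqP; apply: val_inj.
by rewrite mul0r.
Qed.

Section Ineq.
Variable R : realType.
Variables (n : nat) (r : R).
Hypothesis hr : 0 < r.

Definition Tn := \sum_(i < n) r ^+ i.
Definition Sn := Tn + r ^+ n.
Definition Hn : R := Hs R n.
Definition ex (rv : bool) (i : nat) := if rv then (n - i.+1)%N else i.
Definition Qsum rv := \sum_(i < n) (Tn + r ^+ (ex rv i)) / i.+1%:R.

Lemma sum_ex rv : \sum_(i < n) r ^+ (ex rv i) = Tn.
Proof.
case: rv => //=; rewrite /Tn -(big_mkord xpredT (fun i => r ^+ i)).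
by rewrite big_rev_mkord subn0.
Qed.

Lemma ex_lt rv (i : 'I_n) : (ex rv i < n)%N.
Proof. case: rv => /=; last exact: ltn_ord. by case: n i => [[]//|m] i; rewrite subSS ltnS leq_subr. Qed.

Lemma rT1 : r * Tn + 1 = Sn.
Proof.
rewrite /Sn /Tn mulr_sumr.
have e : \sum_(i < n.+1) r ^+ i = 1 + \sum_(i < n) r * r ^+ i.
  by rewrite big_ord_recl expr0; congr (_ + _); apply: eq_bigr => i _; rewrite exprS.
by rewrite addrC -e big_ord_recr.
Qed.

Lemma Tn_ge1 : (0 < n)%N -> 1 <= Tn.
Proof.
rewrite /Tn; case: n => [//|m] _; rewrite big_ord_recl expr0 lerDl.
by apply: sumr_ge0 => i _; rewrite exprn_ge0 // ltW.
Qed.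

Lemma Tn_ge0 : 0 <= Tn.
Proof. by apply: sumr_ge0 => i _; rewrite exprn_ge0 // ltW. Qed.

Lemma Hn_ge0 : 0 <= Hn.
Proof. by apply: sumr_ge0 => i _; rewrite invr_ge0. Qed.

Lemma pow_le m : (m <= n)%N -> r ^+ m <= 1 + r ^+ n.
Proof.
move=> hm; case: (lerP r 1) => h.
  by rewrite (le_trans (exprn_ile1 _ (ltW hr) h)) // lerDl exprn_ge0 // ltW.
by rewrite (le_trans (ler_weXn2l (ltW h) hm)) // lerDr.
Qed.

Lemma Qsum_split rv : Qsum rv = Tn * Hn + \sum_(i < n) r ^+ (ex rv i) / i.+1%:R.
Proof.
rewrite /Qsum /Hn mulr_sumr -big_split /=; apply: eq_bigr => i _.
by rewrite mulrDl.
Qed.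

Lemma ineq_low rv : (0 < n)%N -> Sn * (Hn + n%:R^-1) <= (1 + r) * Qsum rv.
Proof.
move=> hn.
have h1 : Tn * n%:R^-1 <= \sum_(i < n) r ^+ (ex rv i) / i.+1%:R.
  rewrite -(sum_ex rv) mulr_suml; apply: ler_sum => i _.
  rewrite ler_pM2l ?exprn_gt0 //; rewrite lef_pV2 ?posrE ?ltr0Sn ?ltr0n //.
  by rewrite ler_nat ltn_ord.
have h2 : Sn <= (1 + r) * Tn.
  rewrite -rT1 mulrDl mul1r addrC lerD2r Tn_ge1 //.
idtac.
rewrite Qsum_split.
have hH := Hn_ge0; have hT := Tn_ge0.
have hi : 0 <= n%:R^-1 :> R by rewrite invr_ge0.
have hr1 : 0 <= 1 + r by rewrite addr_ge0 // ltW.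
apply: (le_trans (y := (1 + r) * Tn * (Hn + n%:R^-1))).
  by rewrite ler_wpM2r // addr_ge0.
rewrite -mulrA ler_wpM2l // mulrDr lerD2l //.
Qed.

Lemma ineq_up_gen rv : (4 <= n)%N ->
  (1 + r) * Qsum rv <= 2 * n%:R * (Hn + 1) * Sn / n.+1%:R.
Proof.
move=> hn.
have hr1 : 0 <= 1 + r by rewrite addr_ge0 // ltW.
set X := fun i : nat => r ^+ (ex rv i) * (1 + r).
have hX : forall i : 'I_n, 0 <= X i by move=> i; rewrite mulr_ge0 // exprn_ge0 // ltW.
have hXb : forall i : 'I_n, X i <= 2 * (1 + r ^+ n).
  move=> i; rewrite /X mulrDr mulr1 -exprSr.
  have := pow_le _ (ltnW (ex_lt rv i)); have := pow_le _ (ex_lt rv i); lra.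
have hsum : \sum_(i < n) X i = Tn + Sn - 1.
  by rewrite -mulr_suml sum_ex mulrDr mulr1 mulrC -rT1; lra.
have h0 : (0 < n)%N by apply: leq_trans hn.
have h1 : (1 < n)%N by apply: leq_trans hn.
have hQ : (1 + r) * \sum_(i < n) r ^+ (ex rv i) / i.+1%:R
     <= 2/3 * X 0%N + 1/6 * X 1%N + 1/3 * \sum_(i < n) X i.
  rewrite -(@sum_ind R n 0 X h0) -(@sum_ind R n 1 X h1).
  rewrite !mulr_sumr -!big_split /=; apply: ler_sum => i _.
  rewrite mulrCA -/(X i) [_ / _]mulrC mulrC.
  have hXi := hX i.
  case: i hXi => [[|[|k]] hk] /= hXi.
  - rewrite /X in hXi *; rewrite invr1; lra.
  - rewrite /X in hXi *; lra.
  - have hk3 : (k.+3%:R : R)^-1 <= 1/3.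
      by rewrite div1r lef_pV2 ?posrE ?ltr0n // ler_nat.
    have := ler_wpM2l hXi hk3.
    rewrite /X in hXi *; move=> h; rewrite mulrA; apply: le_trans h _.
    by rewrite !mul0r !mulr0 !add0r mulrC.
have [H1 H2] : 4/3 <= Hn /\ 3 * Hn <= 2 * n%:R - 1.
  by rewrite /Hn -(subnK hn); apply: Hs_bounds.
have hP : 0 <= 1 + r ^+ n by rewrite addr_ge0 // exprn_ge0 // ltW.
have hS : 0 < Sn.
  by rewrite -rT1 (lt_le_trans ltr01) // lerDr mulr_ge0 ?Tn_ge0 // ltW.
have hA : (1 + r) * Tn = 2 * Sn - (1 + r ^+ n).
  by move: rT1; rewrite /Sn; lra.
have hX0 := hXb (Ordinal h0); have hX1 := hXb (Ordinal h1).
rewrite /= in hX0 hX1.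
rewrite Qsum_split mulrDr mulrA hA.
have hPH : 0 <= (1 + r ^+ n) * (Hn - 4/3) by apply: mulr_ge0 => //; lra.
have hSH : 0 <= Sn * (2 * n%:R - 1 - 3 * Hn) by apply: mulr_ge0; lra.
rewrite ler_pdivlMr ?ltr0n //.
rewrite hsum in hQ.
have e : Tn = Sn - r ^+ n by rewrite /Sn; lra.
rewrite e in hQ.
rewrite -natr1.
nra.
Qed.
End Ineq.

Lemma ineq_up (R : realType) (n : nat) (r : R) (hr : 0 < r) rv : (0 < n)%N ->
  (1 + r) * @Qsum R n r rv <= 2 * n%:R * (Hn R n + 1) * @Sn R n r / n.+1%:R.
Proof.
case: n => [//|[|[|[|m]]]] _; last by apply: ineq_up_gen.
all: rewrite /Qsum /Sn /Hn /Hs /Tn /ex; case: rv;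
  rewrite !big_ord_recr !big_ord0 /= ?expr0 ?expr1 ?invr1 ?divr1 ?mulr1 ?add0r.
all: rewrite ?subSS ?subn0.
all: try nra.
all: have h := mulr_ge0 (ltW hr) (sqr_ge0 (r - 1/2)); nra.
Qed.

Lemma sum_indb (R : realType) (m k : nat) (F : nat -> R) :
  \sum_(i < m) ((i:nat) == k)%:R * F i = (k < m)%:R * F k.
Proof.
case: (ltnP k m) => hk.
  rewrite (bigD1 (Ordinal hk)) //= eqxx mul1r big1 ?addr0 ?mul1r // => i hi.
  have -> : ((i:nat) == k) = false.
    by apply/negbTE; apply: contra hi => /eqP h; apply/eqP; apply: val_inj.
  by rewrite mul0r.
rewrite mul0r big1 // => i _.
have -> : ((i:nat) == k) = false by apply/negbTE; have := ltn_ord i; lia.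
by rewrite mul0r.
Qed.

Lemma sum_ind_ord (R : realType) (m : nat) (F : 'I_m -> R) (k : 'I_m) :
  \sum_(i < m) ((i:nat) == k)%:R * F i = F k.
Proof.
rewrite (bigD1 k) //= eqxx mul1r big1 ?addr0 // => i hi.
have -> : ((i:nat) == k) = false by apply/negbTE.
by rewrite mul0r.
Qed.

Section Mat.
Variables (R : realType) (n : nat) (beta delta theta : R).
Local Notation N := n.+1.
Hypothesis hn0 : (0 < n)%N.
Local Notation r := (expR (- xval R beta delta theta)).

Lemma r_gt0 : 0 < r. Proof. exact: expR_gt0. Qed.

Definition cc (a : nat) : R := ((a * (N - a))%N)%:R / ((N ^ 2)%N)%:R.

Lemma cc_gt0 a : (0 < a)%N -> (a < N)%N -> 0 < cc a.
Proof.
move=> h1 h2; rewrite /cc divr_gt0 // ltr0n ?muln_gt0 ?expn_gt0 //.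
by rewrite h1 subn_gt0.
Qed.

Lemma r1_neq0 : 1 + r != 0.
Proof. by apply: lt0r_neq0; have := r_gt0; lra. Qed.

Lemma up_eq a : u_up R N beta delta theta a = cc a / (1 + r).
Proof. by []. Qed.

Lemma down_eq a : u_down R N beta delta theta a = cc a * r / (1 + r).
Proof.
rewrite /u_down expRN -/(cc a).
have h := expR_gt0 (xval R beta delta theta).
set e := expR _ in h *.
rewrite -mulrA; congr (_ * _); field.
by apply/andP; split; rewrite ?gt_eqF // ltr_wpDl // ltW.
Qed.

Definition A : 'M[R]_n := 1%:M - Umat R N beta delta theta.

Lemma Aentry (i j : 'I_n) : A i j = ((i:nat) == j)%:R * cc i.+1
   - ((j:nat) == i.+1)%:R * (cc i.+1 / (1 + r))
   - ((j.+1 == i))%:R * (cc i.+1 * r / (1 + r)).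
Proof.
rewrite /A !mxE /= up_eq down_eq.
case: i j => [i hi] [j hj] /=.
have -> : (Ordinal hi == Ordinal hj) = (i == j) by [].
rewrite !eqSS.
case: (eqVneq j i.+1) => [e1|n1]; case: (eqVneq j.+1 i) => [e2|n2];
  case: (eqVneq i j) => [e3|n3]; try lia.
all: try subst j; try subst i; rewrite ?eqxx /=.
all: have hr1 : 1 + r != 0 by apply: lt0r_neq0; have := r_gt0; lra.
all: by field.
Qed.

Lemma col_formula (G : nat -> R) (j : 'I_n) :
  ((\row_(i < n) G i) *m A) 0 j = G j * cc j.+1
   - (0 < j)%:R * (G j.-1 * (cc j / (1 + r)))
   - (j.+1 < n)%:R * (G j.+1 * (cc j.+2 * r / (1 + r))).
Proof.
rewrite mxE.
under eq_bigr => i _ do rewrite Aentry mxE !mulrBr.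
rewrite !sumrB.
have e1 : \sum_(i < n) G i * (((i:nat) == j)%:R * cc i.+1) = G j * cc j.+1.
  under eq_bigr => i _ do rewrite mulrCA.
  by rewrite (sum_indb _ _ _ (fun i => G i * cc i.+1)) ltn_ord mul1r.
have e3 : \sum_(i < n) G i * ((j.+1 == i)%:R * (cc i.+1 * r / (1 + r))) =
   (j.+1 < n)%:R * (G j.+1 * (cc j.+2 * r / (1 + r))).
  under eq_bigr => i _ do rewrite mulrCA eq_sym.
  by rewrite (sum_indb _ _ _ (fun i => G i * (cc i.+1 * r / (1 + r)))).
have e2 : \sum_(i < n) G i * (((j:nat) == i.+1)%:R * (cc i.+1 / (1 + r))) =
   (0 < j)%:R * (G j.-1 * (cc j / (1 + r))).
  clear e1 e3; case: j => [[|j] hj] /=.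
    by rewrite mul0r big1 // => i _; rewrite mul0r mulr0.
  under eq_bigr => i _ do rewrite mulrCA eqSS eq_sym.
  by rewrite (sum_indb _ _ _ (fun i => G i * (cc i.+1 / (1 + r)))) ltnW.
by rewrite e1 e2 e3.
Qed.

Local Notation T := (Tn R n r).
Local Notation S := (Sn R n r).

Lemma S_gt0 : 0 < S.
Proof.
have h1 := r_gt0; have h2 := @Tn_ge0 R n _ h1.
rewrite -rT1; nra.
Qed.

Definition vv (a : nat) : R := (1 + r) * (T + r ^+ (n - a)) / S.
Definition G (i : nat) : R := vv i.+1 / cc i.+1.

Lemma Gcc (i : nat) : (i < n)%N -> G i * cc i.+1 = vv i.+1.
Proof.
move=> hi; rewrite /G divfK // lt0r_neq0 // cc_gt0 //.
Qed.

Lemma yA : (\row_(i < n) G i) *m A = \row_(k < n) (((k:nat) == 0)%:R + ((k:nat) == n.-1)%:R).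
Proof.
apply/rowP => j; rewrite col_formula mxE.
have hS := S_gt0; have hr := r_gt0; have hr1 := r1_neq0.
have hSn : S != 0 by apply: lt0r_neq0.
have rT := rT1 R n r; 
case: j => [[|j] hj] /=.
  rewrite Gcc // mul0r subr0.
  case: (ltnP 1 n) => h1.
    rewrite mulr1n mul1r 2!mulrA Gcc // /vv.
    have [m hm] : exists m, n = m.+2 by exists (n - 2)%N; lia.
    have -> : (0 == n.-1) = false by rewrite hm.
    have hS2 : S = T + r * (r * r ^+ m).
      by rewrite /S /Sn -/T; congr (_ + _); rewrite hm !exprS.
    have -> : (n - 1 = m.+1)%N by lia.
    have -> : (n - 2 = m)%N by lia.
    rewrite exprS mulr0n addr0 hS2; rewrite hS2 in hSn.
    by field; rewrite hr1 hSn.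
  have hn1 : n = 1%N by lia.
  rewrite mulr0n mul0r subr0 /vv hn1 /Sn /Tn big_ord_recr big_ord0 /= expr0 add0r.
  by field.
have e1 : G j.+1 * cc j.+2 = vv j.+2 by rewrite Gcc.
have e2 : G j * (cc j.+1 / (1 + r)) = vv j.+1 / (1 + r).
  by rewrite mulrA Gcc // ltnW.
have e3 : (j.+2 < n)%:R * (G j.+2 * (cc j.+3 * r / (1 + r))) =
          (j.+2 < n)%:R * (vv j.+3 * r / (1 + r)).
  by case: (ltnP j.+2 n) => h; rewrite ?mul0r ?mul1r // 2!mulrA Gcc.
rewrite e1 e2 e3 mulr1n mul1r.
case: (ltnP j.+2 n) => h2.
  rewrite mulr1n mul1r /vv.
  have [m hm] : exists m, n = (j.+3 + m)%N by exists (n - j.+3)%N; lia.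
  have -> : (j.+1 == n.-1) = false by apply/negbTE; lia.
  have -> : (n - j.+2 = m.+1)%N by lia.
  have -> : (n - j.+1 = m.+2)%N by lia.
  have -> : (n - j.+3 = m)%N by lia.
  rewrite mulr0n !exprS.
  by field; rewrite hr1 hSn.
have hn : n = j.+2 by lia.
rewrite mulr0n mul0r subr0 /vv.
have -> : (j.+1 == n.-1) = true by apply/eqP; lia.
have -> : (n - j.+2 = 0)%N by lia.
have -> : (n - j.+1 = 1)%N by lia.
rewrite expr0 expr1 mulr1n add0r.
rewrite -rT; rewrite -rT in hSn.
by field; rewrite hr1 hSn.
Qed.


Lemma A_unit : A \in unitmx.
Proof.
rewrite unitmxE unitfE; apply/negP => /det0P [v vn0 vA].
pose G' := fun k : nat => \sum_(i < n) ((i:nat) == k)%:R * v 0 i.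
have hv : v = \row_(i < n) G' i.
  by apply/rowP => i; rewrite mxE /G' (sum_ind_ord _ _ (fun i => v 0 i)).
pose Z := fun k : nat => G' k * cc k.+1.
have hr := r_gt0; have hr1 := r1_neq0.
have eqj : forall j, (j < n)%N ->
    (1 + r) * Z j = (0 < j)%:R * Z j.-1 + (j.+1 < n)%:R * (r * Z j.+1).
  move=> j hj.
  have := congr1 (fun M : 'M[R]_(1, n) => M 0 (Ordinal hj)) vA.
  rewrite hv col_formula mxE /= => h.
  have e3 : G' j.+1 * (cc j.+2 * r / (1 + r)) = Z j.+1 * r / (1 + r).
    by rewrite 2!mulrA.
  have e2 : (0 < j)%:R * (G' j.-1 * (cc j / (1 + r))) = (0 < j)%:R * (Z j.-1 / (1 + r)).
    by case: j hj h e3 => [|j] /= *; rewrite ?mul0r // !mul1r mulrA.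
  rewrite e2 e3 -/(Z j) in h.
  have : (1 + r) * Z j - ((0 < j)%:R * Z j.-1 + (j.+1 < n)%:R * (r * Z j.+1)) =
     (1 + r) * (Z j - (0 < j)%:R * (Z j.-1 / (1 + r)) - (j.+1 < n)%:R * (Z j.+1 * r / (1 + r))).
    by field.
  by rewrite h mulr0 => /eqP; rewrite subr_eq0 => /eqP.
have claim1 : forall k, (k.+1 < n)%N -> r * Z k.+1 = Z k + r * Z 0%N.
  elim=> [|k IH] hk.
    by have := eqj 0%N (ltnW hk); rewrite hk /= mul0r add0r mul1r => <-; ring.
  have := eqj k.+1 (ltnW hk); rewrite /= hk mulr1n !mul1r.
  have := IH (ltnW hk); lra.
have claim2 : forall k, (k < n)%N -> Z 0%N ^+ 2 <= Z 0%N * Z k.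
  elim=> [|k IH] hk; first by rewrite expr2.
  have := claim1 k hk; have := IH (ltnW hk) => h1 h2.
  have h3 : r * (Z 0%N * Z k.+1) = Z 0%N * Z k + r * Z 0%N ^+ 2.
    by rewrite mulrCA h2; ring.
  have h4 : 0 <= Z 0%N ^+ 2 by rewrite sqr_ge0.
  nra.
have Z00 : Z 0%N = 0.
  have hj0 := hn0.
  case: (ltnP 1 n) => h1.
    have [m hm] : exists m, n = m.+2 by exists (n - 2)%N; lia.
    have hm1 : (m.+1 < n)%N by rewrite hm.
    have hm0 : (m < n)%N by rewrite hm; lia.
    have hl := eqj m.+1 hm1.
    rewrite /= (_ : (m.+2 < n)%N = false) ?hm ?ltnn // mulr0n mul0r addr0 mulr1n mul1r in hl.
    have hc := claim1 m hm1.
    have hc2 := claim2 m.+1 hm1.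
    have h4 : 0 <= Z 0%N ^+ 2 by rewrite sqr_ge0.
    nra.
  have := eqj 0%N hj0; rewrite /= (_ : (1 < n)%N = false); last by lia.
  rewrite mul0r mulr0n mul0r addr0 => /eqP; rewrite mulf_eq0 (negbTE hr1) /= => /eqP //.
have Zall : forall k, (k < n)%N -> Z k = 0.
  elim=> [//|k IH] hk.
  have := claim1 k hk; rewrite IH ?(ltnW hk) // Z00 mulr0 addr0 => /eqP.
  by rewrite mulf_eq0 (gt_eqF hr) /= => /eqP.
apply/negP: vn0; rewrite negbK; apply/eqP/rowP => i; rewrite mxE.
have := Zall i (ltn_ord i); rewrite /Z /G' (sum_ind_ord _ _ (fun i => v 0 i)) => /eqP.
have hc : cc i.+1 != 0 by apply: lt0r_neq0; apply: cc_gt0 => //; rewrite ltnS.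
by rewrite mulf_eq0 (negbTE hc) orbF => /eqP.
Qed.

Lemma nsum_eq (i : 'I_n) : nsum R N beta delta theta i = G i.
Proof.
have h : ((\row_(i < n) G i) *m A) *m invmx A = \row_(i < n) G i.
  by rewrite -mulmxA mulmxV ?A_unit // mulmx1.
rewrite yA in h.
have := congr1 (fun M : 'M[R]_(1, n) => M 0 i) h; rewrite /= !mxE => <-.
by rewrite /nsum; apply: eq_bigr => k _; rewrite mxE.
Qed.

Lemma Gterm (i : 'I_n) :
  G i = (N ^ 2)%N%:R * ((1 + r) / S) * ((T + r ^+ (n - i.+1)) / ((i.+1 * (n - i))%N)%:R).
Proof.
have hS := S_gt0; have hr1 := r1_neq0.
have hi := ltn_ord i.
rewrite /G /vv /cc subSS.
have h1 : ((i.+1 * (n - i))%N%:R : R) != 0 by rewrite pnatr_eq0 muln_eq0 /=; lia.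
have h2 : ((N ^ 2)%N%:R : R) != 0 by rewrite pnatr_eq0 expn_eq0.
have hh : forall k : nat, 1 + k%:R != 0 :> R.
  by move=> k; rewrite addrC natr1 pnatr_eq0.
have h3 : (n - i)%:R != 0 :> R by rewrite pnatr_eq0; lia.
by field; rewrite h3 !hh lt0r_neq0.
Qed.

Lemma natr_neq0' (k : nat) : (0 < k)%N -> k%:R != 0 :> R.
Proof. by rewrite pnatr_eq0 -lt0n. Qed.

Lemma Er_eq : E_r R N beta delta theta =
   theta / 2 * ((N ^ 2)%N%:R * ((1 + r) / S) * Qsum R n r false).
Proof.
rewrite /E_r; congr (_ * _).
rewrite /Qsum mulr_sumr.
rewrite -(big_mkord xpredT (fun k => _ * ((T + r ^+ ex n false k) / k.+1%:R))) big_rev_mkord subn0.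
apply: eq_bigr => i _; rewrite nsum_eq Gterm /ex.
have hi := ltn_ord i.
have -> : (n - i.+1).+1 = (n - i)%N by lia.
have hS := S_gt0.
have h1 : (n - i)%:R != 0 :> R by apply: natr_neq0'; lia.
have h2 : (i.+1)%:R != 0 :> R by apply: natr_neq0'.
rewrite natrM.
by field; rewrite h1 (lt0r_neq0 hS) addrC natr1 h2.
Qed.

Lemma Ep_eq : E_p R N beta delta theta =
   theta / 2 * ((N ^ 2)%N%:R * ((1 + r) / S) * Qsum R n r true).
Proof.
rewrite /E_p; congr (_ * _).
rewrite /Qsum mulr_sumr.
apply: eq_bigr => i _; rewrite nsum_eq Gterm /ex subSS.
have hi := ltn_ord i.
have hS := S_gt0.
have h1 : (n - i)%:R != 0 :> R by apply: natr_neq0'; lia.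
have h2 : (i.+1)%:R != 0 :> R by apply: natr_neq0'.
rewrite natrM.
by field; rewrite h1 (lt0r_neq0 hS) addrC natr1 h2.
Qed.
End Mat.

Theorem theorem1 (R : realType) (N : nat) (delta beta theta : R) :
  (2 <= N)%N -> delta < 0 -> 0 < beta -> 0 <= theta ->
  forall E : nat -> R -> R -> R -> R, (E = @E_r R \/ E = @E_p R) ->
    ((N ^ 2)%N)%:R * theta / 2 * (H R N + ((N.-1)%:R)^-1) <= E N beta delta theta /\
    E N beta delta theta <= ((N * N.-1)%N)%:R * theta * (H R N + 1).
Proof.
case: N => [//|n] hN _ _ ht E hE.
have hn : (0 < n)%N by [].
have eH : H R n.+1 = Hn R n.
  by rewrite /H /Hn /Hs big_add1 /= big_mkord.
have hEq : exists rv, E n.+1 beta delta theta = theta / 2 *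
   ((n.+1 ^ 2)%N%:R * ((1 + expR (- xval R beta delta theta)) / Sn R n (expR (- xval R beta delta theta)))
     * Qsum R n (expR (- xval R beta delta theta)) rv).
  case: hE => ->; [exists false; exact: Er_eq | exists true; exact: Ep_eq].
case: hEq => rv ->.
rewrite eH /=.
set r := expR _.
have hr : 0 < r by apply: expR_gt0.
have hS : 0 < Sn R n r.
  have h2 := @Tn_ge0 R n _ hr; rewrite -rT1; nra.
set Q := Qsum R n r rv.
have hlow := @ineq_low R n r hr rv hn.
have hup := @ineq_up R n r hr rv hn.
rewrite -/Q in hlow hup.
set K := (1 + r) * Q / Sn R n r.
have hK1 : Hn R n + n%:R^-1 <= K by rewrite /K ler_pdivlMr // mulrC.
have hK2 : K <= 2 * n%:R * (Hn R n + 1) / n.+1%:R.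
  by rewrite /K ler_pdivrMr // mulrAC.
have eR : theta / 2 * ((n.+1 ^ 2)%N%:R * ((1 + r) / Sn R n r) * Q) =
          theta / 2 * (n.+1 ^ 2)%N%:R * K by rewrite /K; ring.
rewrite eR; split.
  have -> : (n.+1 ^ 2)%N%:R * theta / 2 * (Hn R n + n%:R^-1) = theta / 2 * (n.+1 ^ 2)%N%:R * (Hn R n + n%:R^-1) by ring.
  rewrite ler_wpM2l //.
  by apply: mulr_ge0 => //; apply: divr_ge0.
have hNp : (0 : R) < n.+1%:R by rewrite ltr0n.
have h2 : 0 <= theta / 2 * (n.+1 ^ 2)%N%:R by apply: mulr_ge0 => //; apply: divr_ge0.
apply: (le_trans (ler_wpM2l h2 hK2)).
rewrite natrX natrM.
rewrite le_eqVlt; apply/orP; left; apply/eqP.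
by field; rewrite lt0r_neq0.
Qed.
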